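(* Let $\mathbb{T}$ be a time scale and $\alpha\in(0,1]$. Let $g:\mathbb{T}\to\mathbb{R}$ be strictly increasing, suppose $\tilde{\mathbb{T}}:=\mathrm{Ran}(g)$ is a time scale, and suppose $g$ is nabla fractional differentiable of order $\alpha$ at $t\in\mathbb{T}^k$. If $f:\tilde{\mathbb{T}}\to\mathbb{R}$ is continuously nabla fractional differentiable of order $1$ at each point of $\tilde{\mathbb{T}}^k$, then $$\nabla^{(\alpha)}(f\circ g)(t)=\big(\nabla^{(1)}f\big)(g(t))\cdot\nabla^{(\alpha)}g(t),$$ where $\nabla^{(1)}f$ is computed on the time scale $\tilde{\mathbb{T}}$.
   Context: A time scale is a nonempty closed subset of $\mathbb{R}$ with the relative topology. On a time scale $\mathbb{S}$, for $t\in\mathbb{S}$: $\rho(t)=\sup\{s\in\mathbb{S}:s<t\}$, $\sigma(t)=\inf\{s\in\mathbb{S}:s>t\}$, $\nu(t)=t-\rho(t)$. If $\mathbb{S}$ has a minimum $m$ with $\sigma(m)>m$ then $\mathbb{S}^k=\mathbb{S}\setminus\{m\}$, else $\mathbb{S}^k=\mathbb{S}$. $U_\delta(t)=(t-\delta,t+\delta)\cap\mathbb{S}$, $U^-_\delta(t)=(t-\delta,t)\cap\mathbb{S}$. Let $Q=\{1/q: q \text{ an odd positive integer}\}$; for $\alpha\in Q$, $x^\alpha$ is the real $q$-th root. Definition: $h:\mathbb{S}\to\mathbb{R}$ is nabla fractional differentiable of order $\alpha$ at $t\in\mathbb{S}^k$ if there is $L\in\mathbb{R}$ such that for every $\varepsilon>0$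 there is $\delta>0$ with $|[h(\rho(t))-h(s)]-L[\rho(t)-s]^\alpha|\le\varepsilon|\rho(t)-s|^\alpha$ for all $s\in U_\delta(t)$ if $\alpha\in Q$, resp. all $s\in U^-_\delta(t)$ if $\alpha\notin Q$; then $\nabla^{(\alpha)}h(t):=L$. ''Continuously nabla fractional differentiable of order $1$ at each point of $\tilde{\mathbb{T}}^k$'' means $f$ is nabla fractional differentiable of order $1$ at every point of $\tilde{\mathbb{T}}^k$ and $\nabla^{(1)}f$ is continuous there. *)

(* Defs.v *)
From Stdlib Require Import Reals Lra.
From Coquelicot Require Import Coquelicot.
Open Scope R_scope.

Definition closed_set (S : R -> Prop) : Prop :=
  forall x, (forall eps, 0 < eps -> exists s, S s /\ Rabs (s - x) < eps) -> S x.
Definition time_scale (S : R -> Prop) : Prop := (exists x, S x) /\ closed_set S.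

(* rho(t) = sup {s in S | s < t}, with sup of empty set = t (= inf S). *)
Definition rho (S : R -> Prop) (t : R) : R :=
  match Lub_Rbar (fun s => S s /\ s < t) with Finite r => r | _ => t end.
(* sigma(t) = inf {s in S | s > t}, with inf of empty set = t (= sup S). *)
Definition sigma (S : R -> Prop) (t : R) : R :=
  match Glb_Rbar (fun s => S s /\ t < s) with Finite r => r | _ => t end.

Definition Sk (S : R -> Prop) (t : R) : Prop :=
  S t /\ ~ ((forall s, S s -> t <= s) /\ t < sigma S t).

Definition inQ (a : R) : Prop := exists q : nat, Nat.odd q = true /\ a = / INR q.

(* x^a: for x > 0 the usual power; for x < 0 (only used when a in Q, a = 1/q,
   q odd) the real q-th root -(-x)^a; 0^a = 0. *)
Definition powQ (a x : R) : R :=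
  if Rlt_dec 0 x then Rpower x a
  else if Rlt_dec x 0 then - Rpower (- x) a else 0.
Definition pow_nn (a x : R) : R := if Rlt_dec 0 x then Rpower x a else 0.

Definition nabla_frac (S : R -> Prop) (a : R) (h : R -> R) (t L : R) : Prop :=
  Sk S t /\
  forall eps, 0 < eps -> exists delta, 0 < delta /\
    (inQ a -> forall s, S s -> t - delta < s < t + delta ->
       Rabs ((h (rho S t) - h s) - L * powQ a (rho S t - s))
         <= eps * pow_nn a (Rabs (rho S t - s))) /\
    (~ inQ a -> forall s, S s -> t - delta < s < t ->
       Rabs ((h (rho S t) - h s) - L * powQ a (rho S t - s))
         <= eps * pow_nn a (Rabs (rho S t - s))).

Definition range_on (T : R -> Prop) (g : R -> R) : R -> Prop :=
  fun y => exists x, T x /\ g x = y.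

(* Main.v *)
Require Import Defs.
From Stdlib Require Import Reals Lra Classical.
From Coquelicot Require Import Coquelicot.
Open Scope R_scope.

Lemma Rpower_cont (a x : R) : 0 < x -> forall eta, 0 < eta -> exists d, 0 < d /\
  forall y, Rabs (y - x) < d -> 0 < y /\ Rabs (Rpower y a - Rpower x a) < eta.
Proof.
  intros Hx eta Heta.
  assert (Hc : continuity_pt (fun z => Rpower z a) x).
  { apply derivable_continuous_pt. exists (a * Rpower x (a - 1)). now apply derivable_pt_lim_power. }
  destruct (Hc eta Heta) as [al [Hal H]].
  exists (Rmin al (x/2)). split. { apply Rmin_pos; lra. }
  intros y Hy. assert (Hy1 : Rabs (y - x) < al) by (eapply Rlt_le_trans; [exact Hy| apply Rmin_l]).
  assert (Hy2 : Rabs (y - x) < x/2) by (eapply Rlt_le_trans; [exact Hy| apply Rmin_r]).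
  split. { apply Rabs_def2 in Hy2. lra. }
  destruct (Req_dec y x) as [->|Hne]. { rewrite Rminus_diag, Rabs_R0. lra. }
  apply (H y). split. { split; [exact I| auto]. } exact Hy1.
Qed.

Lemma pow_nn_small (a : R) : 0 < a -> forall eta, 0 < eta -> exists d, 0 < d /\
  forall z, 0 <= z < d -> pow_nn a z < eta.
Proof.
  intros Ha eta Heta. exists (Rpower eta (/ a)). split. { unfold Rpower. apply exp_pos. }
  intros z [Hz0 Hz]. unfold pow_nn. destruct (Rlt_dec 0 z) as [Hp|Hn]; [|lra].
  assert (E : Rpower (Rpower eta (/ a)) a = eta).
  { rewrite Rpower_mult. rewrite Rinv_l by lra. apply Rpower_1; lra. }
  rewrite <- E. apply Rlt_Rpower_l; lra.
Qed.

Lemma powQ_abs (a x : R) : Rabs (powQ a x) = pow_nn a (Rabs x).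
Proof.
  unfold powQ, pow_nn.
  destruct (Rlt_dec 0 x) as [H|H].
  - rewrite (Rabs_right x) by lra. destruct (Rlt_dec 0 x); [|lra].
    apply Rabs_right. left. unfold Rpower; apply exp_pos.
  - destruct (Rlt_dec x 0) as [H2|H2].
    + rewrite (Rabs_left x) by lra. destruct (Rlt_dec 0 (-x)); [|lra].
      rewrite Rabs_Ropp. apply Rabs_right. left. unfold Rpower; apply exp_pos.
    + replace x with 0 by lra. rewrite Rabs_R0. destruct (Rlt_dec 0 0); [lra|]. reflexivity.
Qed.

Lemma pow_nn_ge0 a z : 0 <= pow_nn a z.
Proof. unfold pow_nn. destruct (Rlt_dec 0 z); [left; unfold Rpower; apply exp_pos| lra]. Qed.

Lemma powQ_1 x : powQ 1 x = x.
Proof.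
  unfold powQ. destruct (Rlt_dec 0 x). { apply Rpower_1; lra. }
  destruct (Rlt_dec x 0). { rewrite Rpower_1 by lra. lra. } lra.
Qed.

Lemma pow_nn_1 x : 0 <= x -> pow_nn 1 x = x.
Proof. intros. unfold pow_nn. destruct (Rlt_dec 0 x). { apply Rpower_1; lra. } lra. Qed.

Lemma powQ_0 a : powQ a 0 = 0.
Proof. unfold powQ. destruct (Rlt_dec 0 0); [lra|]. destruct (Rlt_dec 0 0); [lra|]. reflexivity. Qed.

Lemma powQ_cont (a x : R) : 0 < a -> forall eta, 0 < eta -> exists d, 0 < d /\
  forall y, Rabs (y - x) < d -> Rabs (powQ a y - powQ a x) < eta.
Proof.
  intros Ha eta Heta.
  destruct (Rtotal_order 0 x) as [Hx|[Hx|Hx]].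
  - destruct (Rpower_cont a x Hx eta Heta) as [d [Hd H]]. exists d; split; auto.
    intros y Hy. destruct (H y Hy) as [Hy0 Hlt].
    unfold powQ. destruct (Rlt_dec 0 y); [|lra]. destruct (Rlt_dec 0 x); [|lra]. exact Hlt.
  - subst x. destruct (pow_nn_small a Ha eta Heta) as [d [Hd H]]. exists d; split; auto.
    intros y Hy. rewrite powQ_0, Rminus_0_r. rewrite powQ_abs. apply H. split; [apply Rabs_pos|].
    rewrite Rminus_0_r in Hy. exact Hy.
  - assert (Hx' : 0 < -x) by lra.
    destruct (Rpower_cont a (-x) Hx' eta Heta) as [d [Hd H]]. exists d; split; auto.
    intros y Hy. assert (Hy' : Rabs (-y - - x) < d).
    { replace (-y - - x) with (-(y-x)) by ring. now rewrite Rabs_Ropp. }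
    destruct (H (-y) Hy') as [Hy0 Hlt].
    unfold powQ. destruct (Rlt_dec 0 y); [lra|]. destruct (Rlt_dec y 0); [|lra].
    destruct (Rlt_dec 0 x); [lra|]. destruct (Rlt_dec x 0); [|lra].
    replace (- Rpower (- y) a - - Rpower (- x) a) with (-(Rpower (- y) a - Rpower (- x) a)) by ring.
    now rewrite Rabs_Ropp.
Qed.

Lemma rho_le S t : rho S t <= t.
Proof.
  unfold rho. destruct (Lub_Rbar_correct (fun s => S s /\ s < t)) as [Hub Hl].
  assert (H := Hl (Finite t)). destruct (Lub_Rbar _) as [r| |]; simpl in *.
  - apply H. intros x [_ Hx]. simpl. lra.
  - exfalso; apply H. intros x [_ Hx]. simpl. lra.
  - lra.
Qed.

Lemma rho_ub S t s : S s -> s < t -> s <= rho S t.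
Proof.
  intros Hs Hst. unfold rho. destruct (Lub_Rbar_correct (fun s => S s /\ s < t)) as [Hub Hl].
  assert (H := Hl (Finite t)). assert (H2 := Hub s (conj Hs Hst)).
  destruct (Lub_Rbar _) as [r| |]; simpl in *.
  - exact H2.
  - exfalso; apply H. intros x [_ Hx]. simpl. lra.
  - contradiction.
Qed.

Lemma rho_empty S t : ~ (exists s, S s /\ s < t) -> rho S t = t.
Proof.
  intros Hn. unfold rho. destruct (Lub_Rbar_correct (fun s => S s /\ s < t)) as [Hub Hl].
  assert (H := Hl m_infty). destruct (Lub_Rbar _) as [r| |]; simpl in *; auto.
  all: exfalso; apply H; intros x Hx; exfalso; apply Hn; exists x; exact Hx.
Qed.

Lemma rho_approx S t : (exists s, S s /\ s < t) -> forall eps, 0 < eps ->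
  exists s, S s /\ s < t /\ rho S t - eps < s.
Proof.
  intros [s0 [Hs0 Hs0t]] eps Heps. apply NNPP. intros Hn.
  assert (Hb : forall s, S s -> s < t -> s <= rho S t - eps).
  { intros s Hs Hst. apply Rnot_lt_le. intros Hlt. apply Hn. exists s. auto. }
  unfold rho in *. destruct (Lub_Rbar_correct (fun s => S s /\ s < t)) as [Hub Hl].
  assert (H := Hl (Finite t)). assert (H2 := Hub s0 (conj Hs0 Hs0t)).
  destruct (Lub_Rbar _) as [r| |]; simpl in *.
  - assert (H3 := Hl (Finite (r - eps))). simpl in H3.
    assert (r <= r - eps). { apply H3. intros x [Hx Hxt]. simpl. apply Hb; auto. } lra.
  - exfalso; apply H. intros x [_ Hx]. simpl. lra.
  - contradiction.
Qed.

Lemma rho_char S t r : (forall s, S s -> s < t -> s <= r) ->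
  (forall eps, 0 < eps -> exists s, S s /\ s < t /\ r - eps < s) -> rho S t = r.
Proof.
  intros Hb Ha.
  destruct (Ha 1 Rlt_0_1) as [s0 [Hs0 [Hs0t _]]].
  assert (Hle : rho S t <= r).
  { unfold rho. destruct (Lub_Rbar_correct (fun s => S s /\ s < t)) as [Hub Hl].
    assert (H := Hl (Finite r)). assert (H2 := Hub s0 (conj Hs0 Hs0t)).
    destruct (Lub_Rbar _) as [l| |]; simpl in *.
    - apply H. intros x [Hx Hxt]. simpl. auto.
    - exfalso; apply H. intros x [Hx Hxt]. simpl. auto.
    - contradiction. }
  apply Rle_antisym; auto. apply Rnot_lt_le. intros Hlt.
  destruct (Ha (r - rho S t)) as [s [Hs [Hst Hrs]]]; [lra|].
  assert (s <= rho S t) by (apply rho_ub; auto). lra.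
Qed.

Lemma rho_mem S t : Defs.closed_set S -> rho S t < t -> S (rho S t).
Proof.
  intros Hc Hlt.
  assert (Hne : exists s, S s /\ s < t).
  { apply NNPP. intros Hn. rewrite (rho_empty S t Hn) in Hlt. lra. }
  apply Hc. intros eps Heps. destruct (rho_approx S t Hne eps Heps) as [s [Hs [Hst Hr]]].
  exists s. split; auto. assert (s <= rho S t) by (apply rho_ub; auto).
  rewrite Rabs_left1 by lra. lra.
Qed.

Lemma sigma_empty S t : ~ (exists y, S y /\ t < y) -> Defs.sigma S t = t.
Proof.
  intros Hn. unfold Defs.sigma. destruct (Glb_Rbar_correct (fun s => S s /\ t < s)) as [Hlb Hl].
  assert (H := Hl p_infty). destruct (Glb_Rbar _) as [r| |]; simpl in *; auto.
  all: exfalso; apply H; intros x Hx; exfalso; apply Hn; exists x; exact Hx.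
Qed.

Lemma sigma_dense S t : (forall d, 0 < d -> exists y, S y /\ t < y < t + d) -> ~ (t < Defs.sigma S t).
Proof.
  intros Hd. unfold Defs.sigma. destruct (Glb_Rbar_correct (fun s => S s /\ t < s)) as [Hlb Hl].
  destruct (Glb_Rbar _) as [r| |]; simpl in *; try lra.
  intros Hlt. destruct (Hd (r - t)) as [y [Hy [Hty Hyr]]]; [lra|].
  assert (H := Hlb y (conj Hy Hty)). simpl in H. lra.
Qed.

Lemma sigma_gap S t : ~ (t < Defs.sigma S t) -> (exists y, S y /\ t < y) ->
  forall d, 0 < d -> exists y, S y /\ t < y < t + d.
Proof.
  intros Hns [y0 [Hy0 Hty0]] d Hd. apply NNPP. intros Hn.
  assert (Hb : forall y, S y -> t < y -> t + d <= y).
  { intros y Hy Hty. apply Rnot_lt_le. intros Hlt. apply Hn. exists y. auto. }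
  unfold Defs.sigma in Hns. destruct (Glb_Rbar_correct (fun s => S s /\ t < s)) as [Hlb Hl].
  assert (H := Hl (Finite (t + d))). assert (H2 := Hlb y0 (conj Hy0 Hty0)).
  assert (H3 : is_lb_Rbar (fun s => S s /\ t < s) (t + d)).
  { intros x [Hx Hxt]. simpl. auto. }
  specialize (H H3).
  destruct (Glb_Rbar _) as [r| |]; simpl in *; try contradiction. lra.
Qed.
Lemma Rabs_zero_of_le (X c : R) : 0 <= c -> (forall e, 0 < e -> Rabs X <= e * c) -> X = 0.
Proof.
  intros Hc H. destruct (Req_dec X 0) as [|Hn]; auto. exfalso.
  assert (HX : 0 < Rabs X) by (apply Rabs_pos_lt; auto).
  assert (He : 0 < Rabs X / (2 * (c + 1))) by (apply Rdiv_lt_0_compat; lra).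
  specialize (H _ He).
  assert (Rabs X / (2 * (c + 1)) * c <= Rabs X / (2 * (c+1)) * (c + 1)) by (apply Rmult_le_compat_l; lra).
  replace (Rabs X / (2 * (c+1)) * (c + 1)) with (Rabs X / 2) in H0 by (field; lra). lra.
Qed.

Theorem mainTheorem8 (T : R -> Prop) (alpha : R) (g f Df : R -> R) (t Lg : R) :
  time_scale T ->
  0 < alpha <= 1 ->
  (forall x y, T x -> T y -> x < y -> g x < g y) ->
  time_scale (range_on T g) ->
  Sk T t ->
  nabla_frac T alpha g t Lg ->
  (forall x, Sk (range_on T g) x -> nabla_frac (range_on T g) 1 f x (Df x)) ->
  (forall x, Sk (range_on T g) x -> forall eps, 0 < eps -> exists delta, 0 < delta /\
     forall y, Sk (range_on T g) y -> Rabs (y - x) < delta ->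
       Rabs (Df y - Df x) < eps) ->
  nabla_frac T alpha (fun x => f (g x)) t (Df (g t) * Lg).
Proof.
  intros HT Ha Hmono HS Hsk Hg Hf _.
  destruct Hg as [_ Hgd].
  assert (Hle_t := rho_le T t). assert (Hub := rho_ub T t).
  remember (rho T t) as p eqn:Hp.
  assert (Htt : T t) by (destruct Hsk; auto).
  assert (Hgle : forall x y, T x -> T y -> x <= y -> g x <= g y).
  { intros x y Hx Hy Hxy. destruct (Req_dec x y) as [->|]; [lra|]. left. apply Hmono; auto; lra. }
  assert (Hglt : forall x y, T x -> T y -> g x < g y -> x < y).
  { intros x y Hx Hy H. apply Rnot_le_lt. intros Hc. assert (g y <= g x) by auto. lra. }
  assert (Gd : forall e, 0 < e -> exists d, 0 < d /\ forall s, T s -> t - d < s < t + d ->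
     (inQ alpha \/ s < t) ->
     Rabs ((g p - g s) - Lg * powQ alpha (p - s)) <= e * pow_nn alpha (Rabs (p - s))).
  { intros e He. destruct (Hgd e He) as [d [Hd [H1 H2]]]. exists d. split; auto.
    intros s Hs Hr Hq. destruct (classic (inQ alpha)) as [Hi|Hi].
    - apply H1; auto.
    - apply H2; auto. destruct Hq; [contradiction|]. lra. }
  clear Hgd.
  unfold nabla_frac. split; [exact Hsk|].
  rewrite <- Hp.
  enough (Main : forall e, 0 < e -> exists d, 0 < d /\ forall s, T s -> t - d < s < t + d ->
     (inQ alpha \/ s < t) ->
     Rabs ((f (g p) - f (g s)) - Df (g t) * Lg * powQ alpha (p - s)) <= e * pow_nn alpha (Rabs (p - s))).
  { intros e He. destruct (Main e He) as [d [Hd H]]. exists d. split; auto. split.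
    - intros Hi s Hs Hr. apply H; auto.
    - intros Hi s Hs Hr. apply H; auto; lra. }
  destruct (classic (inQ alpha \/ (p = t /\ exists s, T s /\ s < t))) as [Hgood|Hbad].
  2:{ intros e He. apply not_or_and in Hbad. destruct Hbad as [HnQ Hbad].
      destruct (Rlt_dec p t) as [Hlt|Hnlt].
      - exists (t - p). split; [lra|]. intros s Hs Hr [Hq|Hq]; [contradiction|].
        assert (s <= p) by auto. lra.
      - exists 1. split; [lra|]. intros s Hs Hr [Hq|Hq]; [contradiction|].
        exfalso. apply Hbad. split; [lra|]. exists s; auto. }
  assert (K1 : p < t -> inQ alpha). { intros H. destruct Hgood as [|[]]; auto. lra. }
  assert (K2 : ~ (exists s, T s /\ s < t) -> inQ alpha). { intros H. destruct Hgood as [|[]]; auto. contradiction. }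
  assert (Et : g p - g t - Lg * powQ alpha (p - t) = 0).
  { destruct (Req_dec p t) as [Hpt|Hne].
    - replace (p - t) with 0 by lra. rewrite powQ_0. rewrite Hpt. ring.
    - apply (Rabs_zero_of_le _ (pow_nn alpha (Rabs (p - t)))). apply pow_nn_ge0.
      intros e He. destruct (Gd e He) as [d [Hd H]]. apply H; auto. lra. left. apply K1. lra. }
  assert (C : forall eta, 0 < eta -> exists d, 0 < d /\ forall s, T s -> t - d < s < t + d ->
     (inQ alpha \/ s < t) -> Rabs (g s - g t) < eta).
  { intros eta Heta.
    set (M := Rabs (powQ alpha (p - t)) + 1).
    assert (HM : 0 < M) by (unfold M; pose proof (Rabs_pos (powQ alpha (p - t))); lra).
    set (c1 := Rmin 1 (eta / (2 * (Rabs Lg + 1)))).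
    assert (Hc1 : 0 < c1) by (apply Rmin_pos; [lra| apply Rdiv_lt_0_compat; pose proof (Rabs_pos Lg); lra]).
    destruct (powQ_cont alpha (p - t) (proj1 Ha) c1 Hc1) as [d1 [Hd1 H1]].
    assert (He2 : 0 < eta / (2 * M)) by (apply Rdiv_lt_0_compat; lra).
    destruct (Gd _ He2) as [d2 [Hd2 H2]].
    exists (Rmin d1 d2). split; [apply Rmin_pos; auto|].
    intros s Hs Hr Hq.
    assert (Hm1 := Rmin_l d1 d2). assert (Hm2 := Rmin_r d1 d2).
    assert (HA := H2 s Hs ltac:(lra) Hq).
    assert (HB : Rabs (powQ alpha (p - s) - powQ alpha (p - t)) < c1).
    { apply H1. replace (p - s - (p - t)) with (-(s - t)) by ring. rewrite Rabs_Ropp.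
      apply Rabs_def1; lra. }
    rewrite <- powQ_abs in HA.
    assert (HPs : Rabs (powQ alpha (p - s)) < M).
    { unfold M. assert (HB' : c1 <= 1) by apply Rmin_l.
      pose proof (Rabs_triang_inv (powQ alpha (p - s)) (powQ alpha (p - t))). lra. }
    assert (HA' : eta / (2 * M) * Rabs (powQ alpha (p - s)) <= eta / (2 * M) * M).
    { apply Rmult_le_compat_l; lra. }
    replace (eta / (2 * M) * M) with (eta / 2) in HA' by (field; lra).
    assert (HL : Rabs Lg * Rabs (powQ alpha (p - s) - powQ alpha (p - t)) <= Rabs Lg * c1).
    { apply Rmult_le_compat_l; [apply Rabs_pos| lra]. }
    assert (HL2 : Rabs Lg * c1 < eta / 2).
    { assert (c1 <= eta / (2 * (Rabs Lg + 1))) by apply Rmin_r.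
      assert (Rabs Lg * c1 <= Rabs Lg * (eta / (2 * (Rabs Lg + 1)))) by (apply Rmult_le_compat_l; [apply Rabs_pos| lra]).
      assert (Rabs Lg * (eta / (2 * (Rabs Lg + 1))) < eta / 2).
      { pose proof (Rabs_pos Lg).
        replace (Rabs Lg * (eta / (2 * (Rabs Lg + 1)))) with (eta / 2 - eta / (2 * (Rabs Lg + 1))) by (field; lra).
        assert (0 < eta / (2 * (Rabs Lg + 1))) by (apply Rdiv_lt_0_compat; lra). lra. }
      lra. }
    replace (g s - g t) with (- ((g p - g s - Lg * powQ alpha (p - s))) + (g p - g t - Lg * powQ alpha (p - t))
        - Lg * (powQ alpha (p - s) - powQ alpha (p - t))) by ring.
    rewrite Et, Rplus_0_r.
    eapply Rle_lt_trans. apply Rabs_triang. rewrite Rabs_Ropp, Rabs_Ropp, Rabs_mult. lra. }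
  set (S' := range_on T g).
  assert (B : rho S' (g t) = g p).
  { destruct (classic (exists s, T s /\ s < t)) as [Hne|Hemp].
    - destruct (Req_dec p t) as [Hpt|Hpt].
      + rewrite Hpt. apply (rho_char S' (g t) (g t)).
        * intros y _ Hy. lra.
        * intros eps Heps. destruct (C eps Heps) as [d [Hd Hc]].
          destruct (rho_approx T t Hne d Hd) as [s [Hs [Hst Hps]]]. rewrite <- Hp in Hps.
          exists (g s). split; [exists s; auto|].
          assert (g s < g t) by auto.
          assert (Rabs (g s - g t) < eps) by (apply Hc; auto; lra).
          apply Rabs_def2 in H0. split; lra.
      + assert (Hpt' : p < t) by lra.
        assert (HpT : T p). { rewrite Hp. apply (rho_mem T t). apply (proj2 HT). rewrite <- Hp. exact Hpt'. }
        apply (rho_char S' (g t) (g p)).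
        * intros y [x [Hx Hgx]] Hy. subst y. apply Hgle; [exact Hx| exact HpT| apply Hub; [exact Hx| apply Hglt; auto]].
        * intros eps Heps. exists (g p). split; [exists p; auto|]. split; [auto| lra].
    - assert (Hpt : p = t) by (rewrite Hp; apply rho_empty; auto).
      rewrite Hpt. apply (rho_empty S' (g t)). intros [y [[x [Hx Hgx]] Hy]]. subst y.
      apply Hemp. exists x. split; auto. }
  assert (A : Sk S' (g t)).
  { split; [exists t; auto|]. intros [Hmin Hsig].
    destruct (classic (exists s, T s /\ s < t)) as [[s [Hs Hst]]|Hemp].
    - assert (g s < g t) by auto. assert (g t <= g s) by (apply Hmin; exists s; auto). lra.
    - assert (HQ := K2 Hemp).
      destruct (classic (exists y, S' y /\ g t < y)) as [[y [[x [Hx Hgx]] Hy]]|Hno].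
      + subst y. assert (Hxt : t < x) by auto.
        assert (Hts : ~ (t < Defs.sigma T t)).
        { intros Hlt. destruct Hsk as [_ Hsk]. apply Hsk. split; auto.
          intros s Hs. apply Rnot_lt_le. intros Hst. apply Hemp. exists s; auto. }
        apply (sigma_dense S' (g t)); auto.
        intros d Hd. destruct (C d Hd) as [d' [Hd' Hc]].
        destruct (sigma_gap T t Hts (ex_intro _ x (conj Hx Hxt)) d' Hd') as [z [Hz Hzt]].
        exists (g z). split; [exists z; auto|].
        assert (g t < g z) by (apply Hmono; auto; lra).
        assert (Rabs (g z - g t) < d) by (apply Hc; auto; lra).
        apply Rabs_def2 in H0. lra.
      + rewrite sigma_empty in Hsig; auto. lra. }
  destruct (Hf (g t) A) as [_ Hfd].
  intros e He.
  pose proof (Rabs_pos Lg) as HLg. pose proof (Rabs_pos (Df (g t))) as HD.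
  set (e1 := e / (2 * (Rabs Lg + 1))).
  assert (He1 : 0 < e1) by (apply Rdiv_lt_0_compat; lra).
  set (e2 := Rmin 1 (e / (2 * (Rabs (Df (g t)) + 1)))).
  assert (He2 : 0 < e2) by (apply Rmin_pos; [lra| apply Rdiv_lt_0_compat; lra]).
  destruct (Hfd e1 He1) as [df [Hdf [Hf1 _]]].
  assert (Hq1 : inQ 1). { exists 1%nat. split; [reflexivity| simpl; lra]. }
  specialize (Hf1 Hq1).
  destruct (C df Hdf) as [dc [Hdc Hc]].
  destruct (Gd e2 He2) as [dg [Hdg Hg]].
  exists (Rmin dc dg). split; [apply Rmin_pos; auto|].
  intros s Hs Hr Hq.
  assert (Hm1 := Rmin_l dc dg). assert (Hm2 := Rmin_r dc dg).
  assert (HC := Hc s Hs ltac:(lra) Hq). apply Rabs_def2 in HC.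
  assert (HF := Hf1 (g s) (ex_intro _ s (conj Hs eq_refl)) ltac:(lra)).
  fold S' in HF. rewrite B, powQ_1, pow_nn_1 in HF by apply Rabs_pos.
  assert (HG := Hg s Hs ltac:(lra) Hq).
  rewrite <- powQ_abs in HG |- *.
  set (P := Rabs (powQ alpha (p - s))) in *.
  set (X := g p - g s) in *. set (Qs := powQ alpha (p - s)) in *. set (D := Df (g t)) in *.
  assert (HP : 0 <= P) by apply Rabs_pos.
  assert (He2le : e2 <= 1) by apply Rmin_l.
  assert (HX : Rabs X <= (Rabs Lg + 1) * P).
  { replace X with ((X - Lg * Qs) + Lg * Qs) by ring.
    eapply Rle_trans. apply Rabs_triang. rewrite Rabs_mult. fold P.
    assert (e2 * P <= P) by (rewrite <- (Rmult_1_l P) at 2; apply Rmult_le_compat_r; lra). lra. }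
  assert (h1 : e1 * Rabs X <= e / 2 * P).
  { apply Rle_trans with (e1 * ((Rabs Lg + 1) * P)). apply Rmult_le_compat_l; lra.
    right. unfold e1. field. lra. }
  assert (h2 : Rabs D * (e2 * P) <= e / 2 * P).
  { rewrite <- Rmult_assoc. apply Rmult_le_compat_r; auto.
    apply Rle_trans with (Rabs D * (e / (2 * (Rabs D + 1)))).
    apply Rmult_le_compat_l; [lra| apply Rmin_r].
    replace (Rabs D * (e / (2 * (Rabs D + 1)))) with (e / 2 - e / (2 * (Rabs D + 1))) by (field; lra).
    assert (0 < e / (2 * (Rabs D + 1))) by (apply Rdiv_lt_0_compat; lra). lra. }
  assert (h3 : Rabs D * Rabs (X - Lg * Qs) <= Rabs D * (e2 * P)) by (apply Rmult_le_compat_l; lra).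
  replace (f (g p) - f (g s) - D * Lg * Qs) with ((f (g p) - f (g s) - D * X) + D * (X - Lg * Qs)) by (unfold X; ring).
  eapply Rle_trans. apply Rabs_triang. rewrite Rabs_mult. lra.
Qed.
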